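(* Let $k$ be an algebraically closed field, $n\ge1$, $1\le g\le n$, $h:=n+1-g$, and let $K$ and the representations $V_{(p,q)}$ be as in the context. Fix $m\in\mathbb N$. Let $Q_m^\infty$ be the quiver with vertices $(r,s)_\infty$ for $s\in\{0,\dots,h-1\}$ and $0\le r\le h(m+1)-s$, with arrows $\rho_\infty(r,s):(r,s)_\infty\to(r+1,s)_\infty$, and $\pi_\infty(r,s):(r+1,s-1)_\infty\to(r,s)_\infty$ for $1\le s\le h-1$, $\pi_\infty(r,0):(r+1,h-1)_\infty\to(r,0)_\infty$, whenever both endpoints lie in $Q_m^\infty$. Let $F_\infty:kQ_m^\infty\to\operatorname{rep}K$ be the $k$-linear functor defined in the context and $R_m^\infty$ the full subcategory of $\operatorname{rep}K$ with objects $F_\infty X$, $X$ a vertex of $Q_m^\infty$. For $s\in\{0,\dots,h-1\}$ let $s^+=s+1$ if $s<h-1$ and $s^+=0$ if $s=h-1$. Let $\overline{kQ_m^\infty}$ be the quotient of the path category $kQ_m^\infty$ by the ideal generated by (i) $\pi_\infty(r+1,s^+)\circ\rho_\infty(r+1,s)=\rho_\infty(r,s^+)\circ\pi_\infty(r,s^+)$ for all $r,s$ for which all arrows involved lie in $Q_m^\infty$, and (ii) $\pi_\infty(0,s^+)\circ\rho_\infty(0,s)=0$ for all $s\in\{0,\dots,h-1\}$. Then $F_\infty$ induces an isomorphism of $k$-categories $\overline{F_\infty}:\overline{kQ_m^\infty}\to R_m^\infty$.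
   Context: $K$: quiver with vertices $0,\dots,n$ and arrows $\beta_x:x\to x+1$ ($0\le x\le g-1$) and $\alpha_x:x+1\to x$ ($g\le x\le n$), indices modulo $n+1$; $\operatorname{rep}K$ is the category of finite-dimensional representations. For $0\le p\le n$, $q\ge p$: $V_{(p,q)}(x)$ is spanned by the basis vectors $e_i$, $p\le i\le q$, $i\equiv x\pmod{n+1}$; $V_{(p,q)}(\beta_x)(e_i)=e_{i+1}$ if $i<q$, $=0$ if $i=q$; $V_{(p,q)}(\alpha_x)(e_i)=e_{i-1}$ if $i>p$, $=0$ if $i=p$. Composition $\circ$ is written right to left. For integers $a$ and $b>0$, $\mathrm{DIV}(a,b)$ and $\mathrm{MOD}(a,b)$ are the unique integers with $a=\mathrm{DIV}(a,b)\,b+\mathrm{MOD}(a,b)$ and $0\le\mathrm{MOD}(a,b)<b$. Definition of $F_\infty$: put $p_0=0$, $p_s=g+s$ for $1\le s\le h-1$, and $q_{r,s}=g+\mathrm{MOD}(r+s,h)+(n+1)\mathrm{DIV}(r+s,h)$; set $F_\infty(r,s)_\infty=V_{(p_s,q_{r,s})}$. $F_\infty\rho_\infty(r,s):V_{(p_s,q_{r,s})}\to V_{(p_s,q_{r+1,s})}$ is $e_t\mapsto e_t$ for $p_s\le t\le q_{r,s}$. For $1\le s\le h-1$, $F_\infty\pi_\infty(r,s):V_{(p_{s-1},q_{r+1,s-1})}\to V_{(p_s,q_{r,s})}$ is $e_t\mapsto0$ for $p_{s-1}\le t<p_s$ and $e_t\mapsto e_t$ for $p_s\le t\le q_{r+1,s-1}$.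 For $s=0$, $F_\infty\pi_\infty(r,0):V_{(p_{h-1},q_{r+1,h-1})}\to V_{(0,q_{r,0})}$ is $e_t\mapsto 0$ for $p_{h-1}\le t\le n$ and $e_t\mapsto e_{t-(n+1)}$ for $n+1\le t\le q_{r+1,h-1}$. *)

(* Defs.v *)
From HB Require Import structures.
From mathcomp Require Import all_boot all_order all_algebra.
Set Implicit Arguments. Unset Strict Implicit. Unset Printing Implicit Defensive.
Import Order.TTheory GRing.Theory Num.Theory.

(* ---------- Coefficient-matrix encoding of representations of K ----------
   A representation V_(p,q) is encoded by the pair (p,q); its total space has
   basis e_i, p <= i <= q, with e_i lying in V(x) for i = x mod (n+1).
   A linear map V_(p,q) -> V_(p',q') (on total spaces) is encoded by
   c : nat -> nat -> k, where c i j is the coefficient of e_j in f(e_i). *)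

Definition bmat (k : nzRingType) (b : bool) : k := ((nat_of_bool b)%:R)%R.

(* composition  c2 o c1  through the middle interval [pb, qb] *)
Definition compc (k : nzRingType) (pb qb : nat) (c1 c2 : nat -> nat -> k) :=
  fun i l => (\sum_(pb <= j < qb.+1) c1 i j * c2 j l)%R.

(* V_(p,q)(beta_x) extended by zero to the total space *)
Definition betaM (k : nzRingType) (n p q x : nat) : nat -> nat -> k :=
  fun i j => bmat k [&& p <= i <= q, i %% n.+1 == x, i < q & j == i.+1].

(* V_(p,q)(alpha_x) : V(x+1) -> V(x), extended by zero *)
Definition alphaM (k : nzRingType) (n p q x : nat) : nat -> nat -> k :=
  fun i j => bmat k [&& p <= i <= q, i %% n.+1 == x.+1 %% n.+1, p < i & j == i.-1].

Definition isHom (k : nzRingType) (n g : nat) (V W : nat * nat)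
    (f : nat -> nat -> k) : Prop :=
  let: (p, q) := V in let: (p', q') := W in
  (forall i j, (f i j != 0)%R ->
      [&& p <= i <= q, p' <= j <= q' & i %% n.+1 == j %% n.+1]) /\
  (forall x, x < g -> forall i l,
      compc p q (betaM k n p q x) f i l = compc p' q' f (betaM k n p' q' x) i l) /\
  (forall x, g <= x <= n -> forall i l,
      compc p q (alphaM k n p q x) f i l = compc p' q' f (alphaM k n p' q' x) i l).

Definition hh (n g : nat) : nat := n.+1 - g.

Definition vertexQ (n g m : nat) (X : nat * nat) : bool :=
  (X.2 < hh n g) && (X.1 <= hh n g * m.+1 - X.2).

Definition arrowQ := (bool * (nat * nat))%type.
Definition Rho (r s : nat) : arrowQ := (true, (r, s)).
Definition Pi (r s : nat) : arrowQ := (false, (r, s)).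

Definition srcA (n g : nat) (a : arrowQ) : nat * nat :=
  let: (b, (r, s)) := a in
  if b then (r, s) else if s == 0 then (r.+1, (hh n g).-1) else (r.+1, s.-1).
Definition tgtA (n g : nat) (a : arrowQ) : nat * nat :=
  let: (b, (r, s)) := a in if b then (r.+1, s) else (r, s).

Definition validA (n g m : nat) (a : arrowQ) : bool :=
  vertexQ n g m (srcA n g a) && vertexQ n g m (tgtA n g a).

(* paths, listed in traversal order (first arrow first) *)
Fixpoint pathb (n g m : nat) (X Y : nat * nat) (p : seq arrowQ) : bool :=
  match p with
  | [::] => X == Y
  | a :: p' => [&& validA n g m a, srcA n g a == X & pathb n g m (tgtA n g a) Y p']
  end.
Definition isPath (n g m : nat) (X Y : nat * nat) (p : seq arrowQ) : bool :=
  vertexQ n g m X && pathb n g m X Y p.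

Definition pS (n g s : nat) : nat := if s == 0 then 0 else g + s.
(* q_{r,s} depends only on r+s *)
Definition qRS (n g t : nat) : nat :=
  g + t %% hh n g + n.+1 * (t %/ hh n g).
Definition Fobj (n g : nat) (X : nat * nat) : nat * nat :=
  (pS n g X.2, qRS n g (X.1 + X.2)).

Definition Farrow (k : nzRingType) (n g : nat) (a : arrowQ) : nat -> nat -> k :=
  let: (b, (r, s)) := a in
  if b then
    fun i j => bmat k ((i == j) && (pS n g s <= i <= qRS n g (r + s)))
  else if s == 0 then
    fun i j => bmat k ((n.+1 <= i <= qRS n g (r.+1 + (hh n g).-1)) && (j == i - n.+1))
  else
    fun i j => bmat k ((i == j) && (pS n g s <= i <= qRS n g (r.+1 + s.-1))).

Definition idc (k : nzRingType) (V : nat * nat) : nat -> nat -> k :=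
  fun i j => bmat k ((i == j) && (V.1 <= i <= V.2)).

Fixpoint Fpath (k : nzRingType) (n g : nat) (X : nat * nat) (p : seq arrowQ)
    : nat -> nat -> k :=
  match p with
  | [::] => idc k (Fobj n g X)
  | a :: p' => let B := Fobj n g (tgtA n g a) in
               compc B.1 B.2 (Farrow k n g a) (Fpath k n g (tgtA n g a) p')
  end.

(* elements of kQ(X,Y): formal k-linear combinations of paths *)
Definition Flin (k : nzRingType) (n g : nat) (X : nat * nat)
    (c : seq (k * seq arrowQ)) : nat -> nat -> k :=
  fun i j => (\sum_(t <- c) t.1 * Fpath k n g X t.2 i j)%R.

Definition coefc (k : nzRingType) (c : seq (k * seq arrowQ)) (p : seq arrowQ) : k :=
  (\sum_(t <- c | t.2 == p) t.1)%R.

Definition splus (n g s : nat) : nat := if s.+1 < hh n g then s.+1 else 0.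

(* relation ids: (true,(r,s)) = relation (i) at (r,s);
                 (false,(r,s)) = relation (ii) at s (requires r = 0) *)
Definition relQ := (bool * (nat * nat))%type.

Definition rel_terms (k : nzRingType) (n g : nat) (x : relQ) : seq (k * seq arrowQ) :=
  let: (b, (r, s)) := x in
  if b then
    [:: (1%R, [:: Rho r.+1 s; Pi r.+1 (splus n g s)]);
        ((-1)%R, [:: Pi r (splus n g s); Rho r (splus n g s)])]
  else [:: (1%R, [:: Rho 0 s; Pi 0 (splus n g s)])].

Definition rel_src (x : relQ) : nat * nat :=
  let: (b, (r, s)) := x in if b then (r.+1, s) else (0, s).
Definition rel_tgt (n g : nat) (x : relQ) : nat * nat :=
  let: (b, (r, s)) := x in if b then (r.+1, splus n g s) else (0, splus n g s).

Definition rel_valid (n g m : nat) (x : relQ) : bool :=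
  let: (b, (r, s)) := x in
  if b then
    [&& s < hh n g, validA n g m (Rho r.+1 s), validA n g m (Pi r.+1 (splus n g s)),
        validA n g m (Pi r (splus n g s)) & validA n g m (Rho r (splus n g s))]
  else [&& r == 0, s < hh n g, validA n g m (Rho 0 s) & validA n g m (Pi 0 (splus n g s))].

(* generator of the ideal: a * (u o rel o v), with v : X -> src rel, u : tgt rel -> Y *)
Definition gen_terms (k : nzRingType) (n g : nat)
    (G : k * seq arrowQ * relQ * seq arrowQ) : seq (k * seq arrowQ) :=
  let: (a, v, x, u) := G in
  map (fun t => ((a * t.1)%R, v ++ t.2 ++ u)) (rel_terms k n g x).

Definition gen_valid (k : nzRingType) (n g m : nat) (X Y : nat * nat)
    (G : k * seq arrowQ * relQ * seq arrowQ) : bool :=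
  let: (a, v, x, u) := G in
  [&& isPath n g m X (rel_src x) v, rel_valid n g m x & isPath n g m (rel_tgt n g x) Y u].

Definition inIdeal (k : nzRingType) (n g m : nat) (X Y : nat * nat)
    (c : seq (k * seq arrowQ)) : Prop :=
  exists gs : seq (k * seq arrowQ * relQ * seq arrowQ),
    all (@gen_valid k n g m X Y) gs /\
    forall p, coefc c p = coefc (flatten (map (@gen_terms k n g) gs)) p.

(* Main.v *)
Require Import Defs.
From HB Require Import structures.
From mathcomp Require Import all_boot all_order all_algebra.
From mathcomp Require Import zify ring lra.
Set Implicit Arguments. Unset Strict Implicit. Unset Printing Implicit Defensive.
Import Order.TTheory GRing.Theory Num.Theory.
Lemma hh_pos n g : g <= n -> 0 < hh n g.
Proof. rewrite /hh; lia. Qed.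

Lemma hh_add n g : g <= n -> n.+1 = hh n g + g.
Proof. rewrite /hh; lia. Qed.

Lemma qRSE n g t : g <= n -> qRS n g t = g + t + g * (t %/ hh n g).
Proof.
move=> gn; rewrite /qRS {1}(hh_add gn) mulnDl.
have := divn_eq t (hh n g). lia.
Qed.

Lemma qRS_mono n g t t' : g <= n -> t <= t' -> qRS n g t <= qRS n g t'.
Proof.
move=> gn tt; rewrite !qRSE //.
have := leq_div2r (hh n g) tt. nia.
Qed.

Lemma qRS_smono n g t t' : g <= n -> t < t' -> qRS n g t < qRS n g t'.
Proof.
move=> gn tt; rewrite !qRSE //.
have := leq_div2r (hh n g) (ltnW tt). nia.
Qed.

Lemma qRS_le n g t t' : g <= n -> (qRS n g t <= qRS n g t') = (t <= t').
Proof.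
move=> gn; apply/idP/idP; last exact: qRS_mono.
case: (leqP t t') => // /(qRS_smono gn). lia.
Qed.

Lemma qRS_shift n g t w : g <= n -> qRS n g (t + hh n g * w) = qRS n g t + n.+1 * w.
Proof.
move=> gn; rewrite /qRS.
have hp := hh_pos gn.
have -> : t + hh n g * w = w * hh n g + t by rewrite mulnC addnC.
rewrite modnMDl divnMDl //. lia.
Qed.

Lemma qRS_small n g s : g <= n -> s < hh n g -> qRS n g s = g + s.
Proof.
move=> gn sh; rewrite /qRS modn_small // divn_small //; lia.
Qed.

Lemma pS_le n g s : pS n g s <= g + s.
Proof. rewrite /pS; case: eqP; lia. Qed.
Definition shp (k : nzRingType) (lo hi D : nat) : nat -> nat -> k :=
  fun i j => bmat k ((j + D == i) && (lo <= i <= hi)).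

Lemma bmatM (k : nzRingType) b c : (bmat k b * bmat k c = bmat k (b && c))%R.
Proof. by case: b; case: c; rewrite /bmat /= ?mulr1 ?mul0r ?mulr0. Qed.

Lemma bmat0 (k : nzRingType) : bmat k false = 0%R.
Proof. by []. Qed.

Lemma sum_single (k : nzRingType) (F : nat -> k) a b j0 :
  (forall j, j != j0 -> F j = 0%R) ->
  (\sum_(a <= j < b) F j)%R = if a <= j0 < b then F j0 else 0%R.
Proof.
move=> H; case Hj: (a <= j0 < b).
  rewrite (bigD1_seq j0) ?mem_index_iota ?iota_uniq //= big1 ?addr0 //.
rewrite big_seq; apply: big1 => j; rewrite mem_index_iota => Hj'; apply: H.
apply/eqP=> E; subst; by rewrite Hj' in Hj.
Qed.

Lemma compc_shp (k : nzRingType) pb qb lo1 hi1 D1 lo2 hi2 D2 i l :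
  hi1 <= hi2 + D1 -> hi2 <= qb -> pb <= lo2 ->
  compc pb qb (shp k lo1 hi1 D1) (shp k lo2 hi2 D2) i l
  = shp k (maxn lo1 (lo2 + D1)) hi1 (D1 + D2) i l.
Proof.
move=> h1 h2 h3; rewrite /compc (@sum_single _ _ _ _ (i - D1)).
  rewrite /shp bmatM; case: ifP => H.
    congr bmat; lia.
  rewrite -(bmat0 k); congr bmat; lia.
move=> j /eqP Hj; rewrite /shp bmatM -(bmat0 k); congr bmat; lia.
Qed.

Definition isW (a : arrowQ) : bool := ~~ a.1 && (a.2.2 == 0).
Definition DP (n : nat) (p : seq arrowQ) : nat := n.+1 * count isW p.

Lemma splus_lt n g s : g <= n -> splus n g s < hh n g.
Proof. move=> gn; have := hh_pos gn; rewrite /splus; case H: (s.+1 < hh n g); lia. Qed.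

Lemma src_pi n g s : g <= n -> s < hh n g ->
  (if splus n g s == 0 then (hh n g).-1 else (splus n g s).-1) = s.
Proof. move=> gn sh; rewrite /splus; case H: (s.+1 < hh n g) => /=; lia. Qed.

Lemma arrow_facts (k : nzRingType) n g m a : 1 <= g <= n -> validA n g m a ->
  (forall i j, Farrow k n g a i j =
     shp k (pS n g (tgtA n g a).2 + n.+1 * isW a) (Fobj n g (srcA n g a)).2 (n.+1 * isW a) i j)
  /\ (Fobj n g (srcA n g a)).2 <= (Fobj n g (tgtA n g a)).2 + n.+1 * isW a
  /\ pS n g (srcA n g a).2 <= pS n g (tgtA n g a).2 + n.+1 * isW a.
Proof.
move=> /andP [g1 gn].
have hp := hh_pos gn; have hA := hh_add gn.
case: a => [b [r s]] /andP [Hs Ht]; case: b Hs Ht => Hs Ht; rewrite /Farrow /isW /=.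
  rewrite muln0 !addn0; split; first by move=> i j; rewrite /shp addn0; congr bmat; lia.
  split=> //; apply: qRS_mono => //; lia.
case: s Hs Ht => [|s] Hs Ht /=.
  rewrite muln1; split.
    move=> i j; rewrite /shp /pS /=; congr bmat; lia.
  split.
    rewrite addn0 -[X in _ <= _ + X](muln1 n.+1) -qRS_shift //.
    apply: qRS_mono => //; lia.
  rewrite /pS /=; case: ifP; lia.
rewrite muln0 !addn0; split.
  move=> i j; rewrite /shp addn0 /=; congr bmat; lia.
split; first by rewrite addSnnS.
rewrite /pS /=; case: ifP; lia.
Qed.

Lemma compc_ext (k : nzRingType) pb qb (c1 c1' c2 c2' : nat -> nat -> k) i l :
  (forall i j, c1 i j = c1' i j) -> (forall i j, c2 i j = c2' i j) ->
  compc pb qb c1 c2 i l = compc pb qb c1' c2' i l.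
Proof. by move=> H1 H2; apply: eq_bigr => j _; rewrite H1 H2. Qed.

Lemma FpathE (k : nzRingType) n g m p : 1 <= g <= n -> forall X Y,
  pathb n g m X Y p ->
  (forall i j, Fpath k n g X p i j = shp k (pS n g Y.2 + DP n p) (Fobj n g X).2 (DP n p) i j)
  /\ pS n g X.2 <= pS n g Y.2 + DP n p
  /\ (Fobj n g X).2 <= (Fobj n g Y).2 + DP n p.
Proof.
move=> gg; elim: p => [|a p IH] X Y /=.
  move=> /eqP <-; rewrite /DP /= muln0 !addn0.
  split; last by split.
  move=> i j; rewrite /idc /shp /=; congr bmat; lia.
case/and3P=> Ha /eqP Hs Hp.
have [A1 [A2 A3]] := arrow_facts k gg Ha.
have [F1 [F2 F3]] := IH _ _ Hp.
rewrite Hs in A1 A2 A3.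
have -> : DP n (a :: p) = n.+1 * isW a + DP n p by rewrite /DP /= mulnDr.
split.
  move=> i j.
  erewrite compc_ext; [| exact: A1 | exact: F1].
  rewrite compc_shp //.
  rewrite /shp /Fobj /=; move: F2; move: (n.+1 * isW a) (DP n p) => D1 D2 F2; congr bmat; lia.
move: A2 A3 F2 F3; rewrite /Fobj /=; move: (n.+1 * isW a) (DP n p) => D1 D2; lia.
Qed.

Lemma bmat_if (k : nzRingType) (c b : bool) : (if c then bmat k b else 0%R) = bmat k (c && b).
Proof. by case: c. Qed.

Lemma bmatF (k : nzRingType) b : b = false -> bmat k b = 0%R.
Proof. by move->. Qed.

Lemma modD_mul n j w : (j + n.+1 * w) %% n.+1 = j %% n.+1.
Proof. by rewrite addnC mulnC modnMDl. Qed.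

Lemma shp_hom (k : nzRingType) n g p q p' q' w : 1 <= g <= n ->
  p <= p' + n.+1 * w -> q <= q' + n.+1 * w -> g <= q %% n.+1 ->
  (p' == 0) || (g < p' <= n) ->
  isHom n g (p, q) (p', q') (shp k (p' + n.+1 * w) q (n.+1 * w)).
Proof.
move=> /andP [g1 gn] Hp Hq Hqm Hp'.
have F0 : forall i, n.+1 * w <= i -> (i - n.+1 * w) %% n.+1 = i %% n.+1.
  by move=> i Hi; rewrite -{2}(subnK Hi) modD_mul.
have Fb1 : forall i, i.+1 = p' + n.+1 * w -> g <= i %% n.+1.
  move=> i E; case/orP: Hp' => [/eqP p0 | /andP [H1 H2]].
    case: w E {Hp Hq F0} => [|w] E; first by lia.
    have -> : i = n + n.+1 * w by rewrite mulnS in E; lia.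
    by rewrite modD_mul modn_small.
  have -> : i = p'.-1 + n.+1 * w by lia.
  rewrite modD_mul modn_small; lia.
split.
  move=> i j; rewrite /shp; case E: [&& _, _ & _]; last by rewrite bmat0 eqxx.
  move=> _; move/and3P: E => [/eqP E1 E2 E3].
  rewrite -E1 modD_mul eqxx; lia.
split.
  move=> x xg i l; rewrite /compc.
  rewrite (@sum_single _ _ _ _ i.+1); last first.
    move=> j Hj /=; rewrite /betaM bmatF ?mul0r //.
    by apply/negbTE; rewrite !negb_and (negbTE Hj) !orbT.
  rewrite (@sum_single _ _ _ _ (i - n.+1 * w)); last first.
    move=> j Hj /=; rewrite /shp bmatF ?mul0r //.
    apply/negbTE; apply/negP => /andP [/eqP E _]; move/eqP: Hj; lia.
  rewrite /betaM /shp !bmatM !bmat_if; congr bmat.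
  have Fb2 : i = q -> g <= i %% n.+1 by move->.
  have Fb := Fb1 i; have Hr := ltn_pmod i (ltn0Sn n).
  move: Hp Hq Fb F0; set D := n.+1 * w => Hp Hq Fb F0.
  case: (leqP D i) => HDi.
    rewrite F0 //; clearbody D; clear F0 Fb1.
    move: (i %% n.+1) Fb Fb2 Hr => r1 Fb Fb2 Hr; lia.
  rewrite (_ : i - D = 0); last by lia.
  rewrite mod0n; clearbody D; clear F0 Fb1.
  move: (i %% n.+1) Fb Fb2 Hr => r1 Fb Fb2 Hr; lia.
move=> x /andP [xg xn] i l; rewrite /compc.
rewrite (@sum_single _ _ _ _ i.-1); last first.
  move=> j Hj /=; rewrite /alphaM bmatF ?mul0r //.
  by apply/negbTE; rewrite !negb_and (negbTE Hj) !orbT.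
rewrite (@sum_single _ _ _ _ (i - n.+1 * w)); last first.
  move=> j Hj /=; rewrite /shp bmatF ?mul0r //.
  apply/negbTE; apply/negP => /andP [/eqP E _]; move/eqP: Hj; lia.
rewrite /alphaM /shp !bmatM !bmat_if; congr bmat.
have Hr := ltn_pmod i (ltn0Sn n).
move: Hp Hq F0; set D := n.+1 * w => Hp Hq F0.
case: (leqP D i) => HDi.
  rewrite F0 //; clearbody D; clear F0 Fb1.
  move: (i %% n.+1) (x.+1 %% n.+1) Hr => r1 y Hr; lia.
rewrite (_ : i - D = 0); last by lia.
rewrite mod0n; clearbody D; clear F0 Fb1.
move: (i %% n.+1) (x.+1 %% n.+1) Hr => r1 y Hr; lia.
Qed.

Lemma isHom_ext (k : nzRingType) n g V W (f f' : nat -> nat -> k) :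
  (forall i j, f i j = f' i j) -> isHom n g V W f -> isHom n g V W f'.
Proof.
case: V W => p q [p' q'] E [H1 [H2 H3]]; split.
  by move=> i j; rewrite -E; apply: H1.
split.
  move=> x Hx i l; rewrite -(compc_ext _ _ _ _ (fun _ _ => erefl) E).
  by rewrite -(compc_ext _ _ _ _ E (fun _ _ => erefl)) H2.
move=> x Hx i l; rewrite -(compc_ext _ _ _ _ (fun _ _ => erefl) E).
by rewrite -(compc_ext _ _ _ _ E (fun _ _ => erefl)) H3.
Qed.

Lemma compc_addr (k : nzRingType) pb qb (c f1 f2 : nat -> nat -> k) i l :
  compc pb qb c (fun i j => f1 i j + f2 i j)%R i l = (compc pb qb c f1 i l + compc pb qb c f2 i l)%R.
Proof. by rewrite /compc -big_split; apply: eq_bigr => j _; rewrite mulrDr. Qed.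

Lemma compc_addl (k : nzRingType) pb qb (c f1 f2 : nat -> nat -> k) i l :
  compc pb qb (fun i j => f1 i j + f2 i j)%R c i l = (compc pb qb f1 c i l + compc pb qb f2 c i l)%R.
Proof. by rewrite /compc -big_split; apply: eq_bigr => j _; rewrite mulrDl. Qed.

Lemma compc_scr (k : comNzRingType) pb qb (c f : nat -> nat -> k) a i l :
  compc pb qb c (fun i j => a * f i j)%R i l = (a * compc pb qb c f i l)%R.
Proof. by rewrite /compc mulr_sumr; apply: eq_bigr => j _; rewrite mulrCA. Qed.

Lemma compc_scl (k : comNzRingType) pb qb (c f : nat -> nat -> k) a i l :
  compc pb qb (fun i j => a * f i j)%R c i l = (a * compc pb qb f c i l)%R.
Proof. by rewrite /compc mulr_sumr; apply: eq_bigr => j _; rewrite mulrA. Qed.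

Lemma compc_0r (k : nzRingType) pb qb (c : nat -> nat -> k) i l :
  compc pb qb c (fun _ _ => 0%R) i l = 0%R.
Proof. by rewrite /compc big1 // => j _; rewrite mulr0. Qed.

Lemma compc_0l (k : nzRingType) pb qb (c : nat -> nat -> k) i l :
  compc pb qb (fun _ _ => 0%R) c i l = 0%R.
Proof. by rewrite /compc big1 // => j _; rewrite mul0r. Qed.

Lemma isHom_0 (k : nzRingType) n g V W : isHom n g V W (fun _ _ => 0%R : k).
Proof.
case: V W => p q [p' q']; split; first by move=> i j; rewrite eqxx.
by split=> x _ i l; rewrite compc_0r compc_0l.
Qed.

Lemma isHom_add (k : nzRingType) n g V W (f1 f2 : nat -> nat -> k) :
  isHom n g V W f1 -> isHom n g V W f2 -> isHom n g V W (fun i j => f1 i j + f2 i j)%R.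
Proof.
case: V W => p q [p' q'] [A1 [A2 A3]] [B1 [B2 B3]]; split.
  move=> i j H; case E: (f1 i j != 0%R); first exact: A1.
  apply: B1; apply: contra H; move/negbFE: E => /eqP -> /eqP ->; by rewrite addr0.
split=> x Hx i l; by rewrite compc_addr compc_addl ?A2 ?B2 ?A3 ?B3.
Qed.

Lemma isHom_sc (k : comNzRingType) n g V W (f : nat -> nat -> k) a :
  isHom n g V W f -> isHom n g V W (fun i j => a * f i j)%R.
Proof.
case: V W => p q [p' q'] [A1 [A2 A3]]; split.
  move=> i j H; apply: A1; apply: contra H => /eqP ->; by rewrite mulr0.
split=> x Hx i l; by rewrite compc_scr compc_scl ?A2 ?A3.
Qed.

Lemma qRS_mod n g t : g <= n -> g <= qRS n g t %% n.+1.
Proof.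
move=> gn; rewrite /qRS modD_mul modn_small.
  lia.
have := ltn_pmod t (hh_pos gn); have := hh_add gn; lia.
Qed.

Lemma pS_form n g s : g <= n -> s < hh n g -> (pS n g s == 0) || (g < pS n g s <= n).
Proof. move=> gn sh; have := hh_add gn; rewrite /pS; case E: (s == 0) => /=; lia. Qed.

Lemma Fpath_hom (k : nzRingType) n g m X Y p : 1 <= g <= n ->
  vertexQ n g m X -> vertexQ n g m Y -> pathb n g m X Y p ->
  isHom n g (Fobj n g X) (Fobj n g Y) (Fpath k n g X p).
Proof.
move=> gg HX HY Hp; have [F1 [F2 F3]] := FpathE k gg Hp.
move: (gg) => /andP [g1 gn].
apply: (isHom_ext (f := shp k (pS n g Y.2 + DP n p) (Fobj n g X).2 (DP n p))).
  by move=> i j; rewrite F1.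
rewrite /DP /Fobj /= in F2 F3 *; apply: shp_hom => //.
  exact: qRS_mod.
by apply: pS_form => //; case/andP: HY.
Qed.

Lemma Flin_hom (k : comNzRingType) n g m X Y (c : seq (k * seq arrowQ)) : 1 <= g <= n ->
  vertexQ n g m X -> vertexQ n g m Y -> all (fun t => isPath n g m X Y t.2) c ->
  isHom n g (Fobj n g X) (Fobj n g Y) (Flin n g X c).
Proof.
move=> gg HX HY; elim: c => [|t c IH].
  move=> _; apply: (isHom_ext (f := fun _ _ => 0%R)); last exact: isHom_0.
  by move=> i j; rewrite /Flin big_nil.
case/andP=> /andP [_ Ht] Hc.
have := isHom_add (isHom_sc t.1 (Fpath_hom k gg HX HY Ht)) (IH Hc).
apply: isHom_ext => i j; by rewrite /Flin big_cons.
Qed.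

Definition nextA n g (X : nat * nat) (b : bool) : arrowQ :=
  if b then Rho X.1 X.2 else Pi X.1.-1 (splus n g X.2).

Fixpoint build n g (X : nat * nat) (ks : seq bool) : seq arrowQ :=
  match ks with
  | [::] => [::]
  | b :: ks' => nextA n g X b :: build n g (tgtA n g (nextA n g X b)) ks'
  end.

Fixpoint endv n g (X : nat * nat) (ks : seq bool) : nat * nat :=
  match ks with
  | [::] => X
  | b :: ks' => endv n g (tgtA n g (nextA n g X b)) ks'
  end.

Lemma validA_next n g m a X : g <= n -> validA n g m a -> srcA n g a = X ->
  a = nextA n g X a.1.
Proof.
move=> gn; have hp := hh_pos gn.
case: a => [b [r s]]; case: b => /andP [Hs Ht] <- //=.
case: s Hs Ht => [|s] Hs Ht /=.
  by rewrite /splus prednK // ltnn.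
rewrite /splus; case/andP: Ht => /= Ht _; by rewrite Ht.
Qed.

Lemma path_build n g m p : g <= n -> forall X Y, pathb n g m X Y p ->
  p = build n g X (map fst p).
Proof.
move=> gn; elim: p => [|a p IH] X Y //= /and3P [Ha /eqP Hs Hp].
by rewrite -(validA_next gn Ha Hs) -(IH _ _ Hp).
Qed.

Lemma pathb_catP n g m v w : forall X Y, pathb n g m X Y (v ++ w) ->
  exists Z, pathb n g m X Z v /\ pathb n g m Z Y w.
Proof.
elim: v => [|a v IH] X Y /=; first by move=> H; exists X; rewrite eqxx.
case/and3P=> Ha Hs /IH [Z [H1 H2]]; exists Z; by rewrite Ha Hs H1.
Qed.

Lemma pathb_cat n g m v w : forall X Z Y, pathb n g m X Z v -> pathb n g m Z Y w ->
  pathb n g m X Y (v ++ w).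
Proof.
elim: v => [|a v IH] X Z Y /=; first by move=> /eqP ->.
case/and3P=> Ha Hs H1 H2; rewrite Ha Hs /=; exact: IH H1 H2.
Qed.

Lemma build_cat n g ks1 ks2 : forall X,
  build n g X (ks1 ++ ks2) = build n g X ks1 ++ build n g (endv n g X ks1) ks2.
Proof. by elim: ks1 => [|b ks IH] X //=; rewrite IH. Qed.

Lemma pathb_build_end n g m ks : forall X Y, pathb n g m X Y (build n g X ks) ->
  Y = endv n g X ks.
Proof.
elim: ks => [|b ks IH] X Y /=; first by move=> /eqP.
by case/and3P=> _ _ /IH.
Qed.

Lemma vertexQ_le n g m r r' s : vertexQ n g m (r', s) -> r <= r' -> vertexQ n g m (r, s).
Proof. rewrite /vertexQ /=; lia. Qed.

Lemma pis_ok n g m a : g <= n -> forall r s, vertexQ n g m (r, s) -> a <= r ->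
  pathb n g m (r, s) (r - a, (s + a) %% hh n g) (build n g (r, s) (nseq a false)) /\
  endv n g (r, s) (nseq a false) = (r - a, (s + a) %% hh n g) /\
  count isW (build n g (r, s) (nseq a false)) = (s + a) %/ hh n g.
Proof.
move=> gn; have hp := hh_pos gn.
elim: a => [|a IH] r s HX Har.
  case/andP: HX => /= Hs _.
  by rewrite /= subn0 addn0 modn_small // divn_small // eqxx.
case: r HX Har => [|r] HX Har //=.
have Hv : vertexQ n g m (r, splus n g s).
  move: HX; rewrite /vertexQ /splus /=; case: ifP; lia.
have [H1 [H2 H3]] := IH r (splus n g s) Hv Har.
have Ea : (splus n g s + a) %% hh n g = (s + a.+1) %% hh n g /\
          isW (Pi r (splus n g s)) + (splus n g s + a) %/ hh n g = (s + a.+1) %/ hh n g.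
  case/andP: HX => /= Hs _.
  rewrite /isW /splus /=; case: ifP => Hs1 /=.
    by rewrite addSnnS.
  have -> : s + a.+1 = 1 * hh n g + a by lia.
  by rewrite modnMDl divnMDl.
case: Ea => E1 E2.
rewrite -E1 H2 -E2 H3 subSS; split=> //.
have Hsrc : (if splus n g s == 0 then (r.+1, (hh n g).-1) else (r.+1, (splus n g s).-1)) = (r.+1, s).
  case/andP: HX => /= Hs _; move: (src_pi gn Hs); by case: ifP => _ ->.
by rewrite /validA /= Hsrc HX Hv eqxx.
Qed.

Lemma rho_endv n g b : forall r s, endv n g (r, s) (nseq b true) = (r + b, s).
Proof. by elim: b => [|b IH] r s /=; rewrite ?addn0 // IH addSnnS. Qed.

Lemma rho_count n g b : forall r s, count isW (build n g (r, s) (nseq b true)) = 0.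
Proof. by elim: b => [|b IH] r s //=; rewrite IH. Qed.

Lemma rhos_ok n g m b : forall r s, vertexQ n g m (r + b, s) ->
  pathb n g m (r, s) (r + b, s) (build n g (r, s) (nseq b true)).
Proof.
elim: b => [|b IH] r s HY /=; first by rewrite addn0 eqxx.
rewrite eqxx /= /validA /=.
rewrite (vertexQ_le HY) ?(vertexQ_le (r := r.+1) HY) /=; try lia.
by rewrite -addSnnS IH // addSnnS.
Qed.

Lemma pi_needs_r n g m a ks : forall r s Y,
  pathb n g m (r, s) Y (build n g (r, s) (nseq a false ++ ks)) -> a <= r.
Proof.
elim: a => [|a IH] r s Y //=.
case/and3P=> _ /eqP Hs /IH.
case: r Hs => [|r] /=; first by case: ifP.
by move=> _ H.
Qed.

Lemma NF_info n g m a b r s Y : g <= n -> vertexQ n g m (r, s) ->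
  pathb n g m (r, s) Y (build n g (r, s) (nseq a false ++ nseq b true)) ->
  a <= r /\ Y = (r - a + b, (s + a) %% hh n g) /\
  count isW (build n g (r, s) (nseq a false ++ nseq b true)) = (s + a) %/ hh n g.
Proof.
move=> gn HX Hp; have Ha := pi_needs_r Hp.
have [H1 [H2 H3]] := pis_ok gn HX Ha.
move: Hp; rewrite build_cat H2 => /pathb_catP [Z [HZ1 HZ2]].
have EZ := pathb_build_end HZ1; rewrite H2 in EZ; subst Z.
have -> := pathb_build_end HZ2.
by rewrite rho_endv count_cat H3 rho_count addn0.
Qed.

Lemma NF_exists n g m a b r s Y : g <= n -> vertexQ n g m (r, s) -> vertexQ n g m Y ->
  a <= r -> Y = (r - a + b, (s + a) %% hh n g) ->
  pathb n g m (r, s) Y (build n g (r, s) (nseq a false ++ nseq b true)) /\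
  count isW (build n g (r, s) (nseq a false ++ nseq b true)) = (s + a) %/ hh n g.
Proof.
move=> gn HX HY Ha EY.
have [H1 [H2 H3]] := pis_ok gn HX Ha.
rewrite build_cat H2 count_cat H3 rho_count addn0; split=> //.
apply: pathb_cat H1 _; rewrite EY; apply: rhos_ok; by rewrite -EY.
Qed.

Definition EqI (k : nzRingType) n g m X Y (c1 c2 : seq (k * seq arrowQ)) : Prop :=
  exists gs : seq (k * seq arrowQ * relQ * seq arrowQ),
    all (gen_valid n g m X Y) gs /\
    forall p, coefc c1 p = (coefc c2 p + coefc (flatten (map (@gen_terms k n g) gs)) p)%R.

Lemma coefc_cat (k : nzRingType) (c1 c2 : seq (k * seq arrowQ)) p :
  coefc (c1 ++ c2) p = (coefc c1 p + coefc c2 p)%R.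
Proof. by rewrite /coefc big_cat. Qed.

Lemma coefc_nil (k : nzRingType) p : coefc ([::] : seq (k * seq arrowQ)) p = 0%R.
Proof. by rewrite /coefc big_nil. Qed.

Lemma flat_cat (k : nzRingType) n g (gs1 gs2 : seq (k * seq arrowQ * relQ * seq arrowQ)) :
  flatten (map (@gen_terms k n g) (gs1 ++ gs2)) =
  flatten (map (@gen_terms k n g) gs1) ++ flatten (map (@gen_terms k n g) gs2).
Proof. by rewrite map_cat flatten_cat. Qed.

Lemma EqI_refl (k : nzRingType) n g m X Y (c : seq (k * seq arrowQ)) : EqI n g m X Y c c.
Proof. by exists [::]; split=> // p; rewrite /= coefc_nil addr0. Qed.

Lemma EqI_trans (k : nzRingType) n g m X Y (c1 c2 c3 : seq (k * seq arrowQ)) :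
  EqI n g m X Y c1 c2 -> EqI n g m X Y c2 c3 -> EqI n g m X Y c1 c3.
Proof.
move=> [gs1 [V1 E1]] [gs2 [V2 E2]]; exists (gs2 ++ gs1); split.
  by rewrite all_cat V1 V2.
by move=> p; rewrite E1 E2 flat_cat coefc_cat addrA.
Qed.

Lemma EqI_cat (k : nzRingType) n g m X Y (c1 c1' c2 c2' : seq (k * seq arrowQ)) :
  EqI n g m X Y c1 c1' -> EqI n g m X Y c2 c2' -> EqI n g m X Y (c1 ++ c2) (c1' ++ c2').
Proof.
move=> [gs1 [V1 E1]] [gs2 [V2 E2]]; exists (gs1 ++ gs2); split.
  by rewrite all_cat V1 V2.
by move=> p; rewrite !coefc_cat E1 E2 flat_cat coefc_cat addrACA.
Qed.

Lemma EqI_coef (k : nzRingType) n g m X Y (c1 c1' c2 c2' : seq (k * seq arrowQ)) :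
  (forall p, coefc c1 p = coefc c1' p) -> (forall p, coefc c2 p = coefc c2' p) ->
  EqI n g m X Y c1 c2 -> EqI n g m X Y c1' c2'.
Proof. move=> H1 H2 [gs [V E]]; exists gs; split=> // p; by rewrite -H1 -H2 E. Qed.

Definition sc (k : nzRingType) (a : k) (c : seq (k * seq arrowQ)) :=
  map (fun t => (a * t.1, t.2)%R) c.
Definition scG (k : nzRingType) (a : k) (G : k * seq arrowQ * relQ * seq arrowQ) :=
  let: (b, v, x, u) := G in ((a * b)%R, v, x, u).

Lemma coefc_sc (k : nzRingType) (a : k) c p : coefc (sc a c) p = (a * coefc c p)%R.
Proof. by rewrite /coefc big_map mulr_sumr. Qed.

Lemma sc_flat (k : nzRingType) n g (a : k) gs :
  flatten (map (@gen_terms k n g) (map (scG a) gs)) = sc a (flatten (map (@gen_terms k n g) gs)).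
Proof.
rewrite /sc map_flatten -!map_comp; congr flatten; apply: eq_map => [[[[b v] x] u]] /=.
rewrite /gen_terms -map_comp; apply: eq_map => t /=; by rewrite mulrA.
Qed.

Lemma EqI_sc (k : nzRingType) n g m X Y (a : k) c1 c2 :
  EqI n g m X Y c1 c2 -> EqI n g m X Y (sc a c1) (sc a c2).
Proof.
move=> [gs [V E]]; exists (map (scG a) gs); split.
  rewrite all_map; apply: sub_all V => [[[[b v] x] u]] //.
by move=> p; rewrite sc_flat !coefc_sc E mulrDr.
Qed.

Definition pre (k : nzRingType) (e : arrowQ) (c : seq (k * seq arrowQ)) :=
  map (fun t => (t.1, e :: t.2)) c.
Definition preG (k : nzRingType) (e : arrowQ) (G : k * seq arrowQ * relQ * seq arrowQ) :=
  let: (b, v, x, u) := G in (b, e :: v, x, u).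

Lemma coefc_pre_nil (k : nzRingType) e (c : seq (k * seq arrowQ)) : coefc (pre e c) [::] = 0%R.
Proof. by rewrite /coefc big_map big1. Qed.

Lemma coefc_pre_cons (k : nzRingType) e e' p (c : seq (k * seq arrowQ)) :
  coefc (pre e c) (e' :: p) = if e == e' then coefc c p else 0%R.
Proof.
rewrite /coefc big_map; case: eqP => [<-|ne].
  by apply: eq_bigl => t /=; rewrite eqseq_cons eqxx.
by rewrite big1 // => t /=; rewrite eqseq_cons => /andP [/eqP].
Qed.

Lemma pre_flat (k : nzRingType) n g e gs :
  flatten (map (@gen_terms k n g) (map (preG e) gs)) = pre e (flatten (map (@gen_terms k n g) gs)).
Proof.
rewrite /pre map_flatten -!map_comp; congr flatten; apply: eq_map => [[[[b v] x] u]] /=.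
by rewrite /gen_terms -map_comp.
Qed.

Lemma EqI_pre (k : nzRingType) n g m e X Y (c1 c2 : seq (k * seq arrowQ)) :
  validA n g m e -> srcA n g e = X -> vertexQ n g m X ->
  EqI n g m (tgtA n g e) Y c1 c2 -> EqI n g m X Y (pre e c1) (pre e c2).
Proof.
move=> Ve Se VX [gs [V E]]; exists (map (preG e) gs); split.
  rewrite all_map; apply: sub_all V => [[[[b v] x] u]] /=.
  rewrite /gen_valid /isPath /= Ve Se eqxx VX /=.
  by case/and3P=> /andP [_ ->] -> ->.
move=> [|e' p]; first by rewrite pre_flat !coefc_pre_nil addr0.
rewrite pre_flat !coefc_pre_cons; case: eqP => _; [exact: E | by rewrite addr0].
Qed.

Lemma EqI_nil (k : nzRingType) n g m X Y (c : seq (k * seq arrowQ)) :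
  (forall p, coefc c p = 0%R) -> EqI n g m X Y c [::].
Proof. by move=> H; exists [::]; split=> // p; rewrite H /= coefc_nil addr0. Qed.

Lemma EqI_ideal (k : nzRingType) n g m X Y (c : seq (k * seq arrowQ)) :
  EqI n g m X Y c [::] -> inIdeal n g m X Y c.
Proof. by move=> [gs [V E]]; exists gs; split=> // p; rewrite E coefc_nil add0r. Qed.

Lemma coefc_one (k : nzRingType) (a : k) q p : coefc [:: (a, q)] p = if q == p then a else 0%R.
Proof. by rewrite /coefc big_cons big_nil /=; case: eqP; rewrite ?addr0. Qed.

Lemma swap0 (k : nzRingType) n g m s ks Y : 1 <= g <= n ->
  vertexQ n g m (0, s) -> pathb n g m (0, s) Y (build n g (0, s) (true :: false :: ks)) ->
  EqI n g m (0, s) Y [:: (1%R : k, build n g (0, s) (true :: false :: ks))] [::].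
Proof.
move=> /andP [g1 gn] V0 /=; rewrite eqxx /= => /and4P [VR VP _ Hu].
exists [:: (1%R, [::], (false, (0, s)), build n g (0, splus n g s) ks)]; split.
  rewrite /= andbT /gen_valid /isPath /= V0 eqxx VR VP Hu /=.
  case/andP: V0 => /= -> _; by case/andP: VP => _ /= ->.
move=> p; rewrite coefc_nil add0r /= /gen_terms /= mulr1.
by [].
Qed.

Lemma swapS (k : nzRingType) n g m r s ks Y : 1 <= g <= n ->
  vertexQ n g m (r.+1, s) -> pathb n g m (r.+1, s) Y (build n g (r.+1, s) (true :: false :: ks)) ->
  pathb n g m (r.+1, s) Y (build n g (r.+1, s) (false :: true :: ks)) /\
  EqI n g m (r.+1, s) Y [:: (1%R : k, build n g (r.+1, s) (true :: false :: ks))]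
                       [:: (1%R, build n g (r.+1, s) (false :: true :: ks))].
Proof.
move=> /andP [g1 gn] V0 /=; rewrite eqxx /= => /and4P [VR VP _ Hu].
have Hs : s < hh n g by case/andP: V0.
have Hsrc : (if splus n g s == 0 then (r.+1, (hh n g).-1) else (r.+1, (splus n g s).-1)) = (r.+1, s).
  move: (src_pi gn Hs); by case: ifP => _ ->.
have VT : vertexQ n g m (r.+1, splus n g s) by case/andP: VP.
have VP' : validA n g m (Pi r (splus n g s)).
  rewrite /validA /= Hsrc V0 /=; exact: (vertexQ_le VT).
have VR' : validA n g m (Rho r (splus n g s)).
  by rewrite /validA /= VT (vertexQ_le VT).
split.
  by rewrite /= VP' Hsrc eqxx VR' eqxx Hu.
exists [:: (1%R, [::], (true, (r, s)), build n g (r.+1, splus n g s) ks)]; split.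
  rewrite /= andbT /gen_valid /isPath /= V0 eqxx Hs VR VP VP' VR' VT Hu.
  by [].
move=> p; rewrite /= /gen_terms /= !mulr1 /coefc !big_cons !big_nil /=.
set A := Rho r.+1 s :: _; set B := Pi r _ :: _.
have AB : A != B by [].
case: (A =P p) => [<-|_]; case: (B =P p) => [E|_] //=.
all: by rewrite ?addr0 ?add0r ?mulrN1 ?mul1r ?addrN.
Qed.

Definition NF n g (X : nat * nat) (a b : nat) := build n g X (nseq a false ++ nseq b true).

Lemma sc1 (k : nzRingType) (a : k) q p : coefc (sc a [:: (1%R, q)]) p = coefc [:: (a, q)] p.
Proof. by rewrite coefc_sc !coefc_one; case: eqP; rewrite ?mulr1 ?mulr0. Qed.

Lemma moveR (k : nzRingType) n g m b a : 1 <= g <= n -> forall X Y,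
  vertexQ n g m X -> pathb n g m X Y (build n g X (true :: nseq a false ++ nseq b true)) ->
  EqI n g m X Y [:: (1%R : k, build n g X (true :: nseq a false ++ nseq b true))] [::] \/
  (pathb n g m X Y (NF n g X a b.+1) /\
   EqI n g m X Y [:: (1%R : k, build n g X (true :: nseq a false ++ nseq b true))]
                 [:: (1%R, NF n g X a b.+1)]).
Proof.
move=> gg; elim: a => [|a IH] [r s] Y VX Hp.
  by right; split=> //; apply: EqI_refl.
case: r VX Hp => [|r] VX Hp.
  by left; apply: swap0.
have [Hp' E1] := swapS k gg VX Hp.
set e := nextA n g (r.+1, s) false.
move: (Hp') => /= /and3P [Ve /eqP Se Hq].
have VT : vertexQ n g m (tgtA n g e) by case/andP: Ve.
case: (IH _ _ VT Hq) => [E2 | [Hq2 E2]].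
  left; apply: EqI_trans E1 _.
  exact: (EqI_pre Ve Se VX E2).
right; split.
  by rewrite /NF /= Ve Se eqxx.
apply: EqI_trans E1 _.
exact: (EqI_pre Ve Se VX E2).
Qed.

Lemma sort_path (k : nzRingType) n g m ks : 1 <= g <= n -> forall X Y,
  vertexQ n g m X -> pathb n g m X Y (build n g X ks) ->
  EqI n g m X Y [:: (1%R : k, build n g X ks)] [::] \/
  exists a b, pathb n g m X Y (NF n g X a b) /\
    EqI n g m X Y [:: (1%R : k, build n g X ks)] [:: (1%R, NF n g X a b)].
Proof.
move=> gg; elim: ks => [|b ks IH] X Y VX Hp.
  by right; exists 0, 0; split=> //; apply: EqI_refl.
set e := nextA n g X b.
move: (Hp) => /= /and3P [Ve /eqP Se Hq].
have VT : vertexQ n g m (tgtA n g e) by case/andP: Ve.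
case: (IH _ _ VT Hq) => [E2 | [a [b' [Hq2 E2]]]].
  by left; exact: (EqI_pre Ve Se VX E2).
have E3 := EqI_pre Ve Se VX E2.
have Hp3 : pathb n g m X Y (build n g X (b :: nseq a false ++ nseq b' true)).
  by rewrite /= Ve Se eqxx.
clear Hp; case: b @e Ve Se Hq Hq2 VT E2 E3 Hp3 => e Ve Se Hq Hq2 VT E2 E3 Hp3.
  case: (@moveR k n g m b' a gg X Y VX Hp3) => [E4 | [Hp4 E4]].
    by left; apply: EqI_trans E3 E4.
  by right; exists a, b'.+1; split=> //; apply: EqI_trans E3 E4.
by right; exists a.+1, b'; split.
Qed.

Lemma reduce_list (k : nzRingType) n g m X Y (c : seq (k * seq arrowQ)) : 1 <= g <= n ->
  all (fun t => isPath n g m X Y t.2) c ->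
  exists c' : seq (k * seq arrowQ), EqI n g m X Y c c' /\
    forall t, t \in c' -> exists a b, t.2 = NF n g X a b /\ pathb n g m X Y t.2.
Proof.
move=> gg; move: (gg) => /andP [_ gn].
elim: c => [|[l p] c IH].
  by move=> _; exists [::]; split=> //; apply: EqI_refl.
move=> /andP [/andP [VX Hp] Hc]; have [c' [E' H']] := IH Hc.
have Hb := path_build gn Hp; rewrite Hb in Hp.
case: (sort_path k gg VX Hp) => [E1 | [a [b [Hq E1]]]].
  exists c'; split; last by [].
  have E2 := EqI_sc l E1.
  have E3 : EqI n g m X Y [:: (l, p)] [::].
    apply: (EqI_coef _ _ E2) => q; first by rewrite sc1 -Hb.
    by rewrite /sc.
  exact: (EqI_cat E3 E').
exists ((l, NF n g X a b) :: c'); split.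
  have E2 := EqI_sc l E1.
  have E3 : EqI n g m X Y [:: (l, p)] [:: (l, NF n g X a b)].
    apply: (EqI_coef _ _ E2) => q; by rewrite sc1 -?Hb.
  exact: (EqI_cat E3 E').
move=> t; rewrite inE => /orP [/eqP -> | /H'] //.
by exists a, b.
Qed.

Lemma sum_single_seq (k : nzRingType) (I : eqType) (r : seq I) (F : I -> k) j0 :
  uniq r -> (forall j, j != j0 -> F j = 0%R) ->
  (\sum_(j <- r) F j)%R = if j0 \in r then F j0 else 0%R.
Proof.
move=> ur H; case Hj: (j0 \in r).
  rewrite (bigD1_seq j0) //= big1 ?addr0 //.
rewrite big_seq; apply: big1 => j Hj'; apply: H.
apply/eqP=> E; subst; by rewrite Hj' in Hj.
Qed.

Lemma Flin_coef (k : nzRingType) n g X (c : seq (k * seq arrowQ)) (S : seq (seq arrowQ)) i j :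
  uniq S -> (forall t, t \in c -> t.2 \in S) ->
  Flin n g X c i j = (\sum_(p <- S) coefc c p * Fpath k n g X p i j)%R.
Proof.
move=> uS; elim: c => [|t c IH] HS.
  rewrite /Flin big_nil big1 // => p _; by rewrite coefc_nil mul0r.
have HS' : forall t, t \in c -> t.2 \in S by move=> t' Ht; apply: HS; rewrite inE Ht orbT.
have Ht : t.2 \in S by apply: HS; rewrite inE eqxx.
rewrite /Flin big_cons -/(Flin n g X c i j) IH //.
have -> : (\sum_(p <- S) coefc (t :: c) p * Fpath k n g X p i j =
     \sum_(p <- S) (if t.2 == p then t.1 * Fpath k n g X p i j else 0) +
     \sum_(p <- S) coefc c p * Fpath k n g X p i j)%R.
  rewrite -big_split; apply: eq_bigr => p _ /=.
  rewrite /coefc big_cons; case: ifP => _; by rewrite ?mulrDl ?add0r.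
congr (_ + _)%R.
rewrite (@sum_single_seq _ _ _ _ t.2) // ?Ht ?eqxx //.
by move=> p /negbTE; rewrite eq_sym => ->.
Qed.

Lemma Flin_cat (k : nzRingType) n g X (c1 c2 : seq (k * seq arrowQ)) i j :
  Flin n g X (c1 ++ c2) i j = (Flin n g X c1 i j + Flin n g X c2 i j)%R.
Proof. by rewrite /Flin big_cat. Qed.

Lemma DP_cat n v w : DP n (v ++ w) = DP n v + DP n w.
Proof. by rewrite /DP count_cat mulnDr. Qed.

Lemma shp_empty (k : nzRingType) lo hi D i j : hi < lo -> shp k lo hi D i j = 0%R.
Proof. move=> H; rewrite /shp bmatF //; lia. Qed.

Lemma gen_zero (k : nzRingType) n g m X Y G i j : 1 <= g <= n ->
  gen_valid n g m X Y G -> Flin n g X (@gen_terms k n g G) i j = 0%R.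
Proof.
move=> gg; move: (gg) => /andP [g1 gn].
case: G => [[[a v] [b [r s]]] u] /and3P [/andP [VX Hv] Hx /andP [VT Hu]].
rewrite /Flin /gen_terms big_map.
case: b Hx Hv Hu VT => /= Hx Hv Hu VT.
  case/and5P: Hx => Hs VR VP VP' VR'.
  have Hsrc : (if splus n g s == 0 then (r.+2, (hh n g).-1) else (r.+2, (splus n g s).-1)) = (r.+2, s).
    move: (src_pi gn Hs); by case: ifP => _ ->.
  have Hsrc' : (if splus n g s == 0 then (r.+1, (hh n g).-1) else (r.+1, (splus n g s).-1)) = (r.+1, s).
    move: (src_pi gn Hs); by case: ifP => _ ->.
  have P1 : pathb n g m X Y (v ++ [:: Rho r.+1 s; Pi r.+1 (splus n g s)] ++ u).
    apply: (pathb_cat Hv); apply: (@pathb_cat _ _ _ _ _ _ (r.+1, splus n g s)) Hu.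
    by rewrite /= VR VP Hsrc !eqxx.
  have P2 : pathb n g m X Y (v ++ [:: Pi r (splus n g s); Rho r (splus n g s)] ++ u).
    apply: (pathb_cat Hv); apply: (@pathb_cat _ _ _ _ _ _ (r.+1, splus n g s)) Hu.
    by rewrite /= VR' VP' Hsrc' !eqxx.
  have [F1 _] := FpathE k gg P1; have [F2 _] := FpathE k gg P2.
  have ED : DP n (v ++ [:: Rho r.+1 s; Pi r.+1 (splus n g s)] ++ u) =
            DP n (v ++ [:: Pi r (splus n g s); Rho r (splus n g s)] ++ u).
    by rewrite !DP_cat /DP /= /isW /= addn0.
  rewrite !big_cons big_nil F1 F2 ED /= mulr1 mulrN1 addr0 mulNr addrN.
  by [].
case/and4P: Hx => /eqP r0 Hs VR VP; subst r.
have P0 : pathb n g m (0, s) (0, splus n g s) [:: Rho 0 s; Pi 0 (splus n g s)].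
  have Hsrc : (if splus n g s == 0 then (1, (hh n g).-1) else (1, (splus n g s).-1)) = (1, s).
    move: (src_pi gn Hs); by case: ifP => _ ->.
  by rewrite /= VR VP Hsrc !eqxx.
have P1 : pathb n g m X Y (v ++ [:: Rho 0 s; Pi 0 (splus n g s)] ++ u).
  by apply: (pathb_cat Hv); apply: (pathb_cat P0 Hu).
have [F1 _] := FpathE k gg P1.
have [_ [_ Q1]] := FpathE k gg Hv.
have [_ [Q2 _]] := FpathE k gg Hu.
rewrite big_cons big_nil F1 shp_empty ?mulr0 ?addr0 //.
rewrite !DP_cat; move: Q1 Q2; rewrite /Fobj /= => Q1 Q2.
have E3 : g + s < pS n g (splus n g s) + DP n [:: Rho 0 s; Pi 0 (splus n g s)].
  rewrite /DP /= /isW /= /pS /splus; have := hh_add gn.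
  case H1: (s.+1 < hh n g) => /=; lia.
have := qRS_small gn Hs; rewrite add0n in Q1.
lia.
Qed.

Lemma gens_zero (k : nzRingType) n g m X Y (gs : seq (k * seq arrowQ * relQ * seq arrowQ)) i j :
  1 <= g <= n -> all (gen_valid n g m X Y) gs ->
  Flin n g X (flatten (map (@gen_terms k n g) gs)) i j = 0%R.
Proof.
move=> gg; elim: gs => [|G gs IH] /=; first by rewrite /Flin big_nil.
case/andP=> HG Hgs; by rewrite Flin_cat (gen_zero i j gg HG) IH // addr0.
Qed.

Lemma EqI_Flin (k : nzRingType) n g m X Y (c1 c2 : seq (k * seq arrowQ)) i j :
  1 <= g <= n -> EqI n g m X Y c1 c2 -> Flin n g X c1 i j = Flin n g X c2 i j.
Proof.
move=> gg [gs [V E]].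
set G := flatten (map (@gen_terms k n g) gs).
set S := undup (map snd (c1 ++ c2 ++ G)).
have uS : uniq S by apply: undup_uniq.
have inS : forall c : seq (k * seq arrowQ), (forall t, t \in c -> t \in c1 ++ c2 ++ G) -> forall t, t \in c -> t.2 \in S.
  move=> c0 Hsub t0 Ht0; rewrite mem_undup; apply/mapP; exists t0 => //; exact: Hsub.
rewrite (@Flin_coef k n g X c1 S i j uS (inS c1 _)); last by move=> t Ht; rewrite mem_cat Ht.
rewrite (@Flin_coef k n g X c2 S i j uS (inS c2 _)); last by move=> t Ht; rewrite !mem_cat Ht orbT.
have := gens_zero i j gg V; rewrite -/G.
rewrite (@Flin_coef k n g X G S i j uS (inS G _)); last by move=> t Ht; rewrite !mem_cat Ht !orbT.
move=> HG.
transitivity (\sum_(p <- S) coefc c2 p * Fpath k n g X p i j +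
              \sum_(p <- S) coefc G p * Fpath k n g X p i j)%R; last by rewrite HG addr0.
rewrite -big_split; apply: eq_bigr => p _.
by rewrite E mulrDl.
Qed.

Lemma bmatT (k : nzRingType) b : b = true -> bmat k b = 1%R.
Proof. by move->; rewrite /bmat /= mulr1n. Qed.

Lemma modS_mod m d : (m %% d).+1 %% d = m.+1 %% d.
Proof. by rewrite -addn1 modnDml addn1. Qed.

Section HomAnalysis.
End HomAnalysis.

Lemma diag1 (k : nzRingType) n g p q p' q' (f : nat -> nat -> k) i j :
  isHom n g (p, q) (p', q') f ->
  p <= i < q -> p' <= j < q' -> i %% n.+1 = j %% n.+1 -> f i j = f i.+1 j.+1.
Proof.
move=> [H1 [H2 H3]] Hi Hj Hm.
case: (ltnP (i %% n.+1) g) => Hx.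
  have := H2 _ Hx i j.+1; rewrite /compc.
  rewrite (@sum_single _ _ _ _ i.+1); last first.
    move=> j' Hj' /=; rewrite /betaM bmatF ?mul0r //.
    by apply/negbTE; rewrite !negb_and Hj' !orbT.
  rewrite (@sum_single _ _ _ _ j); last first.
    move=> j' Hj' /=; rewrite /betaM bmatF ?mulr0 //.
    apply/negbTE; apply/negP => /and4P [_ _ _ /eqP E]; move/eqP: Hj'; lia.
  have B1 : betaM k n p q (i %% n.+1) i i.+1 = 1%R.
    by rewrite /betaM bmatT // eqxx; apply/and4P; split=> //; lia.
  have B2 : betaM k n p' q' (i %% n.+1) j j.+1 = 1%R.
    by rewrite /betaM bmatT // Hm eqxx; apply/and4P; split=> //; lia.
  rewrite B1 B2 mul1r mulr1 !ifT //; lia.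
have Hxn : i %% n.+1 <= n by rewrite -ltnS ltn_pmod.
have := H3 (i %% n.+1) (introT andP (conj Hx Hxn)) i.+1 j; rewrite /compc.
rewrite (@sum_single _ _ _ _ i); last first.
  move=> j' Hj' /=; rewrite /alphaM bmatF ?mul0r //.
  by apply/negbTE; rewrite !negb_and /= Hj' !orbT.
rewrite (@sum_single _ _ _ _ j.+1); last first.
  move=> j' Hj' /=; rewrite /alphaM bmatF ?mulr0 //.
  apply/negbTE; apply/negP => /and4P [_ _ H4 /eqP E]; move/eqP: Hj'; lia.
have B1 : alphaM k n p q (i %% n.+1) i.+1 i = 1%R.
  by rewrite /alphaM bmatT // -modS_mod eqxx; apply/and4P; split=> //; lia.
have B2 : alphaM k n p' q' (i %% n.+1) j.+1 j = 1%R.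
  by rewrite /alphaM bmatT // -modS_mod -Hm modS_mod eqxx; apply/and4P; split=> //; lia.
rewrite B1 B2 mul1r mulr1 !ifT //; lia.
Qed.

Ltac nlia := repeat match goal with H : context [_ %% _] |- _ => clear H | H : context [GRing.zero] |- _ => clear H end; lia.

Lemma boundR (k : nzRingType) n g p q p' q' (f : nat -> nat -> k) i :
  isHom n g (p, q) (p', q') f -> g <= q' %% n.+1 ->
  p <= i < q -> i %% n.+1 = q' %% n.+1 -> f i q' = 0%R.
Proof.
move=> [H1 [H2 H3]] Hq' Hi Hm.
have Hxn : i %% n.+1 <= n by rewrite -ltnS ltn_pmod.
have Hx : g <= i %% n.+1 by rewrite Hm.
have := H3 (i %% n.+1) (introT andP (conj Hx Hxn)) i.+1 q'; rewrite /compc.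
rewrite (@sum_single _ _ _ _ i); last first.
  move=> j' Hj' /=; rewrite /alphaM bmatF ?mul0r //.
  by apply/negbTE; rewrite !negb_and /= Hj' !orbT.
rewrite (@sum_single _ _ _ _ q'.+1); last first.
  move=> j' Hj' /=; rewrite /alphaM bmatF ?mulr0 //.
  apply/negbTE; apply/negP => /and4P [_ _ H4 /eqP E]; move/eqP: Hj'; lia.
have B1 : alphaM k n p q (i %% n.+1) i.+1 i = 1%R.
  by rewrite /alphaM bmatT // -modS_mod eqxx; apply/and4P; split=> //; lia.
rewrite B1 mul1r ifT; last by lia.
by rewrite ifF //; lia.
Qed.

Lemma boundL (k : nzRingType) n g p q p' q' (f : nat -> nat -> k) j :
  isHom n g (p, q) (p', q') f -> 1 <= g <= n -> (p == 0) || (g < p <= n) ->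
  p' < j <= q' -> j %% n.+1 = p -> f p j = 0%R.
Proof.
move=> [H1 [H2 H3]] /andP [g1 gn] Hp Hj Hm.
case: j Hj Hm => [|j0] Hj Hm; first by lia.
have Hxn : j0 %% n.+1 <= n by rewrite -ltnS ltn_pmod.
have Hx : g <= j0 %% n.+1.
  rewrite leqNgt; apply/negP => Hlt.
  move: Hm; rewrite -modS_mod modn_small; last by lia.
  lia.
have := H3 (j0 %% n.+1) (introT andP (conj Hx Hxn)) p j0; rewrite /compc.
rewrite big1; last first.
  by move=> j' _; rewrite /alphaM bmatF ?mul0r //; apply/negbTE; rewrite !negb_and ltnn !orbT.
rewrite (@sum_single _ _ _ _ j0.+1); last first.
  move=> j' Hj' /=; rewrite /alphaM bmatF ?mulr0 //.
  apply/negbTE; apply/negP => /and4P [_ _ H4 /eqP E]; move/eqP: Hj'; lia.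
have B2 : alphaM k n p' q' (j0 %% n.+1) j0.+1 j0 = 1%R.
  by rewrite /alphaM bmatT // modS_mod eqxx; apply/and4P; split=> //; lia.
rewrite B2 mulr1 ifT; last by lia.
by move->.
Qed.

Lemma diagN (k : nzRingType) n g p q p' q' (f : nat -> nat -> k) d :
  isHom n g (p, q) (p', q') f -> forall i j,
  p <= i -> i + d <= q -> p' <= j -> j + d <= q' -> i %% n.+1 = j %% n.+1 ->
  f i j = f (i + d) (j + d).
Proof.
move=> Hf; elim: d => [|d IH] i j H1 H2 H3 H4 Hm; first by rewrite !addn0.
rewrite (IH i j) //; try lia.
rewrite !addnS; apply: (diag1 Hf); try lia.
by rewrite -modnDml Hm modnDml.
Qed.

Lemma classify (k : nzRingType) n g p q p' q' (f : nat -> nat -> k) i j :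
  isHom n g (p, q) (p', q') f -> 1 <= g <= n -> (p == 0) || (g < p <= n) ->
  g <= q' %% n.+1 -> p' <= n -> f i j != 0%R ->
  exists w, [&& p <= p' + n.+1 * w, p' + n.+1 * w <= q & q <= q' + n.+1 * w] /\
    j + n.+1 * w = i /\ f i j = f q (q - n.+1 * w).
Proof.
move=> Hf gg Hp Hq' Hp' Hne.
have [H1 _] := Hf.
move/and3P: (H1 _ _ Hne) => [/andP [pi iq] /andP [p'j jq'] /eqP Hm].
have Hup : q - i <= q' - j.
  rewrite leqNgt; apply/negP => Hlt.
  have h1 : i + (q' - j) <= q by nlia.
  have h2 : j + (q' - j) <= q' by nlia.
  have E := diagN (d := q' - j) Hf pi h1 p'j h2 Hm.
  move: Hne; rewrite E.
  rewrite (_ : j + (q' - j) = q'); last by nlia.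
  rewrite (boundR Hf Hq') ?eqxx //; first by nlia.
  by rewrite -modnDml Hm modnDml subnKC.
set d2 := minn (i - p) (j - p').
have d2i : d2 <= i by rewrite /d2; nlia.
have d2j : d2 <= j by rewrite /d2; nlia.
have Hm2 : (i - d2) %% n.+1 = (j - d2) %% n.+1.
  apply/eqP; rewrite -(eqn_modDr d2) (subnK d2i) (subnK d2j) Hm eqxx //.
have h1 : p <= i - d2 by rewrite /d2; nlia.
have h2 : i - d2 + d2 <= q by rewrite subnK.
have h3 : p' <= j - d2 by rewrite /d2; nlia.
have h4 : j - d2 + d2 <= q' by rewrite subnK.
have E2 := diagN (d := d2) Hf h1 h2 h3 h4 Hm2.
rewrite (subnK d2i) (subnK d2j) in E2.
have Hdown : j - p' <= i - p.
  rewrite leqNgt; apply/negP => Hlt.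
  have Ed2 : d2 = i - p by rewrite /d2; nlia.
  have Hip : i - d2 = p by rewrite Ed2 subKn.
  have Hpn : p <= n by case/orP: Hp; nlia.
  have Hjm : (j - d2) %% n.+1 = p by rewrite -Hm2 Hip modn_small.
  have Z : f (i - d2) (j - d2) = 0%R.
    rewrite Hip; apply: (boundL Hf gg Hp _ Hjm); rewrite /d2; nlia.
  by move: Hne; rewrite -E2 Z eqxx.
have Hji : j <= i.
  rewrite leqNgt; apply/negP => Hlt.
  have : n.+1 %| j - i by rewrite -eqn_mod_dvd ?Hm //; nlia.
  move/dvdn_leq; rewrite subn_gt0 => /(_ Hlt); nlia.
have Hdv : n.+1 %| i - j by rewrite -eqn_mod_dvd ?Hm //.
exists ((i - j) %/ n.+1).
rewrite mulnC divnK //.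
split; first by apply/and3P; split; nlia.
split; first by nlia.
have h5 : i + (q - i) <= q by nlia.
have h6 : j + (q - i) <= q' by nlia.
rewrite (diagN (d := q - i) Hf pi h5 p'j h6 Hm).
congr f; nlia.
Qed.

Lemma classify2 (k : nzRingType) n g p q p' q' (f : nat -> nat -> k) i j w :
  isHom n g (p, q) (p', q') f ->
  [&& p <= p' + n.+1 * w, p' + n.+1 * w <= q & q <= q' + n.+1 * w] ->
  j + n.+1 * w = i -> p' + n.+1 * w <= i <= q -> f i j = f q (q - n.+1 * w).
Proof.
move=> Hf /and3P [C1 C2 C3] Ei /andP [Hi1 Hi2].
have Hm : i %% n.+1 = j %% n.+1 by rewrite -Ei modD_mul.
move: C1 C2 C3 Ei Hi1 Hi2 Hm; set D := n.+1 * w => C1 C2 C3 Ei Hi1 Hi2 Hm.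
clearbody D.
have h1 : p <= i by lia.
have h2 : i + (q - i) <= q by lia.
have h3 : p' <= j by lia.
have h4 : j + (q - i) <= q' by lia.
rewrite (diagN (d := q - i) Hf h1 h2 h3 h4 Hm).
congr f; lia.
Qed.

Lemma NF_bound n g m r s a b Y : g <= n -> vertexQ n g m (r, s) ->
  pathb n g m (r, s) Y (NF n g (r, s) a b) ->
  pS n g Y.2 + DP n (NF n g (r, s) a b) <= qRS n g (r + s).
Proof.
move=> gn HX Hp; have [Ha [EY EC]] := NF_info gn HX Hp.
rewrite /DP /NF EC EY /=.
apply: (@leq_trans (qRS n g (s + a))); last by apply: qRS_mono; lia.
rewrite /qRS; have := pS_le n g ((s + a) %% hh n g); lia.
Qed.

Lemma NF_uniq n g m r s a b a' b' Y : g <= n -> vertexQ n g m (r, s) ->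
  pathb n g m (r, s) Y (NF n g (r, s) a b) ->
  pathb n g m (r, s) Y (NF n g (r, s) a' b') ->
  DP n (NF n g (r, s) a b) = DP n (NF n g (r, s) a' b') -> a = a' /\ b = b'.
Proof.
move=> gn HX H1 H2; have [Ha [EY EC]] := NF_info gn HX H1.
have [Ha' [EY' EC']] := NF_info gn HX H2.
rewrite /DP /NF EC EC' => /eqP; rewrite eqn_pmul2l // => /eqP Ed.
rewrite EY in EY'; case: EY' => E1 E2.
have : s + a = s + a' by rewrite (divn_eq (s + a) (hh n g)) (divn_eq (s + a') (hh n g)) Ed E2.
lia.
Qed.

Lemma trans_cond n g m r s r' s' w : 1 <= g <= n ->
  vertexQ n g m (r, s) -> vertexQ n g m (r', s') ->
  [&& pS n g s <= pS n g s' + n.+1 * w, pS n g s' + n.+1 * w <= qRS n g (r + s)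
    & qRS n g (r + s) <= qRS n g (r' + s') + n.+1 * w] ->
  [/\ s <= s' + hh n g * w, s' + hh n g * w <= r + s & r + s <= r' + s' + hh n g * w].
Proof.
move=> /andP [g1 gn] /andP [/= Hs _] /andP [/= Hs' _] /and3P [C1 C2 C3].
have hp := hh_pos gn; have hA := hh_add gn.
split.
- case: w C1 C2 C3 => [|w] C1 C2 C3.
    move: C1; rewrite /pS muln0 addn0; case: eqP; case: eqP; lia.
  have : hh n g <= hh n g * w.+1 by rewrite leq_pmulr.
  lia.
- case: (eqVneq s' 0) => [s0|s0].
    subst s'; rewrite add0n; rewrite leqNgt; apply/negP => Hlt.
    case: w C1 C2 C3 Hlt => [|w] C1 C2 C3 Hlt; first by lia.
    have E := qRS_shift (hh n g).-1 w gn.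
    have Hh1 : (hh n g).-1 < hh n g by lia.
    have Ehh := qRS_small gn Hh1.
    have : qRS n g (r + s) <= qRS n g ((hh n g).-1 + hh n g * w).
      by apply: qRS_mono => //; rewrite mulnS in Hlt; lia.
    rewrite E Ehh.
    move: C2; rewrite /pS /= mulnS; lia.
  rewrite -(@qRS_le n g (s' + hh n g * w) (r + s) gn) qRS_shift // qRS_small //.
  move: C2; rewrite /pS (negbTE s0); lia.
- by rewrite -(@qRS_le n g (r + s) (r' + s' + hh n g * w) gn) qRS_shift.
Qed.

Lemma fullness (k : comNzRingType) n g m X Y (f : nat -> nat -> k) : 1 <= g <= n ->
  vertexQ n g m X -> vertexQ n g m Y -> isHom n g (Fobj n g X) (Fobj n g Y) f ->
  exists c : seq (k * seq arrowQ), all (fun t => isPath n g m X Y t.2) c /\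
    forall i j, Flin n g X c i j = f i j.
Proof.
move=> gg; move: (gg) => /andP [g1 gn].
case: X => r s; case: Y => r' s' HX HY Hf.
set p := pS n g s; set q := qRS n g (r + s); set p' := pS n g s'; set q' := qRS n g (r' + s').
have Hf' : isHom n g (p, q) (p', q') f := Hf.
set condS := fun w => [&& p <= p' + n.+1 * w, p' + n.+1 * w <= q & q <= q' + n.+1 * w].
set S := [seq w <- iota 0 q.+1 | condS w].
set aw := fun w => s' + hh n g * w - s.
set bw := fun w => r' - (r - aw w).
have NFok : forall w, condS w ->
    pathb n g m (r, s) (r', s') (NF n g (r, s) (aw w) (bw w)) /\
    DP n (NF n g (r, s) (aw w) (bw w)) = n.+1 * w.
  move=> w Hw; have [T1 T2 T3] := trans_cond gg HX HY Hw.
  have Hs' : s' < hh n g by case/andP: HY.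
  have hp := hh_pos gn.
  have Ea : s + aw w = s' + hh n g * w by rewrite /aw; lia.
  have Ha : aw w <= r by rewrite /aw; lia.
  have EY : (r', s') = (r - aw w + bw w, (s + aw w) %% hh n g).
    rewrite Ea (addnC s') (mulnC (hh n g)) modnMDl modn_small //; congr (_, _); rewrite /bw /aw; lia.
  have [P1 P2] := @NF_exists n g m (aw w) (bw w) r s (r', s') gn HX HY Ha EY.
  by split=> //; rewrite /DP /NF P2 Ea (addnC s') (mulnC (hh n g)) divnMDl // divn_small // addn0.
set c := [seq (f q (q - n.+1 * w), NF n g (r, s) (aw w) (bw w)) | w <- S].
exists c; split.
  apply/allP => t /mapP [w Hw ->] /=.
  rewrite mem_filter in Hw; case/andP: Hw => Hw _.
  by rewrite /isPath HX (NFok w Hw).1.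
move=> i j.
have [H1 _] := Hf'.
rewrite /Flin big_map.
have Step : forall w, w \in S ->
    (f q (q - n.+1 * w)%N * Fpath k n g (r, s) (NF n g (r, s) (aw w) (bw w)) i j =
     f i j * shp k (p' + n.+1 * w)%N q (n.+1 * w)%N i j)%R.
  move=> w; rewrite mem_filter => /andP [Hw _].
  have [P1 P2] := NFok w Hw.
  have [F1 _] := FpathE k gg P1.
  rewrite F1 P2 /=.
  case E: ((j + n.+1 * w == i) && (p' + n.+1 * w <= i <= q)).
    rewrite /shp E.
    move/andP: E => [/eqP E1 E2].
    by rewrite (classify2 Hf' Hw E1 E2).
  by rewrite /shp E !bmat0 !mulr0.
rewrite big_seq (eq_bigr _ Step) -big_seq -mulr_sumr.
case: (eqVneq (f i j) 0%R) => [->|Hne]; first by rewrite mul0r.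
have Hp : (p == 0) || (g < p <= n) by apply: pS_form => //; case/andP: HX.
have Hq' : g <= q' %% n.+1 by apply: qRS_mod.
have Hp' : p' <= n by have := pS_form gn (_ : s' < hh n g); case/andP: HY => /= -> _; move/(_ isT); lia.
have [w0 [Hw0 [Ej Ef]]] := classify Hf' gg Hp Hq' Hp' Hne.
move/and3P: (H1 _ _ Hne) => [/andP [pi iq] /andP [p'j jq'] _].
have Hw0S : w0 \in S.
  rewrite mem_filter; apply/andP; split; first exact: Hw0.
  rewrite mem_iota /= add0n ltnS.
  apply: (@leq_trans (n.+1 * w0)); first by rewrite leq_pmull.
  lia.
rewrite (@sum_single_seq _ _ _ _ w0).
- rewrite Hw0S /shp bmatT ?mulr1 //.
  rewrite Ej eqxx /=; apply/andP; split; lia.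
- by rewrite filter_uniq // iota_uniq.
- move=> w Hw; rewrite /shp bmatF //.
  apply/negbTE; apply/negP => /andP [/eqP E _]; move/eqP: Hw; apply.
  apply/eqP; rewrite -(eqn_pmul2l (ltn0Sn n)); apply/eqP; lia.
Qed.

Lemma kernel_to (k : nzRingType) n g m X Y (c : seq (k * seq arrowQ)) : 1 <= g <= n ->
  vertexQ n g m X -> vertexQ n g m Y -> all (fun t => isPath n g m X Y t.2) c ->
  (forall i j, Flin n g X c i j = 0%R) -> inIdeal n g m X Y c.
Proof.
move=> gg; move: (gg) => /andP [g1 gn].
case: X => r s HX HY Hc H0.
have [c' [E HN]] := reduce_list gg Hc.
have H0' : forall i j, Flin n g (r, s) c' i j = 0%R.
  by move=> i j; rewrite -(EqI_Flin _ _ gg E) H0.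
apply: EqI_ideal; apply: EqI_trans E _; apply: EqI_nil => p.
case: (boolP (has (fun t => t.2 == p) c')) => Hh; last first.
  by rewrite /coefc big_hasC.
case/hasP: Hh => t0 Ht0 /eqP Et0.
have [a [b [Ep Vp]]] := HN t0 Ht0; rewrite Et0 in Ep Vp.
set q := qRS n g (r + s).
set D := DP n p.
have Bp := NF_bound gn HX (_ : pathb n g m (r, s) Y (NF n g (r, s) a b)).
rewrite -Ep in Bp; have {}Bp := Bp Vp.
rewrite -(H0' q (q - D)) /Flin /coefc big_mkcond big_seq [RHS]big_seq.
apply: eq_bigr => t Ht.
have [a' [b' [Et Vt]]] := HN t Ht.
have [F1 _] := FpathE k gg Vt.
rewrite F1.
have Bt := NF_bound gn HX (_ : pathb n g m (r, s) Y (NF n g (r, s) a' b')).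
rewrite -Et in Bt; have {}Bt := Bt Vt.
rewrite /shp.
case: (eqVneq t.2 p) => [Etp | Ntp].
  rewrite Etp bmatT ?mulr1 //; rewrite -/D /q; apply/andP; split; first by apply/eqP; lia.
  apply/andP; split; last by [].
  by rewrite -/D in Bp; lia.
rewrite bmatF ?mulr0 //.
apply/negbTE; apply/negP => /andP [/eqP E1 _].
have ED : DP n t.2 = D by rewrite -/D in Bp; rewrite /q in E1 *; lia.
move: Vt Vp ED; rewrite Et /D Ep => Vt Vp ED.
have [Ea Eb] := NF_uniq gn HX Vt Vp ED.
by move: Ntp; rewrite Et Ep Ea Eb eqxx.
Qed.

Lemma obj_inj n g m X Y : 1 <= g <= n -> vertexQ n g m X -> vertexQ n g m Y ->
  Fobj n g X = Fobj n g Y -> X = Y.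
Proof.
move=> /andP [g1 gn]; case: X => r s; case: Y => r' s' /andP [/= Hs _] /andP [/= Hs' _].
rewrite /Fobj /= => [[E1 E2]].
have Es : s = s'.
  move: E1; rewrite /pS; case: eqP; case: eqP; lia.
have : r + s = r' + s'.
  apply/eqP; rewrite eqn_leq -(@qRS_le n g (r + s) (r' + s') gn) -(@qRS_le n g (r' + s') (r + s) gn) E2 leqnn //=.
subst s'; move=> E; congr (_, _); lia.
Qed.

Local Open Scope ring_scope.

Theorem mainTheorem3 (k : closedFieldType) (n g m : nat) :
  (1 <= n)%N -> (1 <= g <= n)%N ->
  (* object map injective *)
  (forall X Y, vertexQ n g m X -> vertexQ n g m Y -> Fobj n g X = Fobj n g Y -> X = Y) /\
  (forall X Y, vertexQ n g m X -> vertexQ n g m Y ->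
     (* F maps kQ(X,Y) into Hom_K(F X, F Y) *)
     (forall c : seq (k * seq arrowQ), all (fun t => isPath n g m X Y t.2) c ->
        isHom n g (Fobj n g X) (Fobj n g Y) (Flin n g X c)) /\
     (* full: surjective onto Hom_K(F X, F Y) *)
     (forall f : nat -> nat -> k, isHom n g (Fobj n g X) (Fobj n g Y) f ->
        exists c : seq (k * seq arrowQ), all (fun t => isPath n g m X Y t.2) c /\
          forall i j, Flin n g X c i j = f i j) /\
     (* kernel is exactly the ideal *)
     (forall c : seq (k * seq arrowQ), all (fun t => isPath n g m X Y t.2) c ->
        ((forall i j, Flin n g X c i j = 0) <-> inIdeal n g m X Y c))).
Proof.
move=> n1 gg; split; first by move=> X Y; apply: obj_inj.
move=> X Y HX HY; split; first by move=> c Hc; exact: (Flin_hom gg HX HY Hc).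
split; first by move=> f Hf; exact: (fullness gg HX HY Hf).
move=> c Hc; split; first by move=> H0; exact: (kernel_to gg HX HY Hc H0).
move=> [gs [V E]] i j.
have HE : EqI n g m X Y c [::].
  by exists gs; split=> // p; rewrite E coefc_nil add0r.
by rewrite (EqI_Flin i j gg HE) /Flin big_nil.
Qed.
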